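(* Let $F_v$ be a non-archimedean local field with ring of integers $\mathcal{O}_{F_v}$, uniformizer $\varpi_v$ and residue field of size $q_v$. Let $e\ge0$ be an integer and let $\phi_v$ be the characteristic function of $\mathrm{Z}(F_v)\mathrm{K}_{v,e}$. Let $(m,u)\in\mathcal{O}_{F_v}\times\mathcal{O}_{F_v}^\times$, $\gamma_{m,u}=\begin{pmatrix}0&1\\-u&m\end{pmatrix}$, $f_v=\mathrm{val}_v(m^2-4u)$, and let $N_v$ be the number of $t\in\mathcal{O}_{F_v}/\varpi_v\mathcal{O}_{F_v}$ with $t^2-mt+u=0$. Then \[ \left|\int_{F_v^\times}\int_{F_v}\phi_v\!\left(\begin{pmatrix}1&x\\0&y\end{pmatrix}^{-1}\gamma_{m,u}\begin{pmatrix}1&x\\0&y\end{pmatrix}\right)\frac{d_vx\,d_vy}{|y|_v^2}\right|\le\begin{cases}\dfrac{q_v-1+N_v}{q_v} & \text{if } e=f_v=0,\\[2mm] 4\,q_v^{-e+\frac{f_v}{2}} & \text{otherwise.}\end{cases} \]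
   Context: $\mathrm{Z}(F_v)$ is the center (scalar matrices) of $\mathrm{GL}_2(F_v)$; $\mathrm{K}_{v,e}=\{\begin{pmatrix}a&b\\c&d\end{pmatrix}\in\mathrm{GL}_2(\mathcal{O}_{F_v}): \varpi_v^e\mid c\}$; $d_vx$ is the additive Haar measure on $F_v$ with $\mathrm{Vol}(\mathcal{O}_{F_v})=1$ and $|\cdot|_v$ the normalized absolute value. (In the paper the left side is the orbital integral $\int_{\overline{\mathrm{G}_{\gamma_{m,u}}(F_v)}\backslash\overline{\mathrm{G}}(F_v)}\phi_v(g^{-1}\gamma_{m,u}g)\,dg$, with the quotient measure defined to be $d_vx\,d_vy/|y|_v^2$ on representatives $\begin{pmatrix}1&x\\0&y\end{pmatrix}$ and zero on the other representatives.) *)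

(* Defs.v *)
From HB Require Import structures.
From mathcomp Require Import all_boot all_order all_algebra.
From mathcomp Require Import all_classical all_reals all_analysis.
Set Implicit Arguments. Unset Strict Implicit. Unset Printing Implicit Defensive.
Import Order.TTheory GRing.Theory Num.Theory.
Local Open Scope classical_set_scope.
Local Open Scope ring_scope.

(* A non-archimedean local field: a field K with a normalized discrete *)
(* valuation v : K -> int (the value of v at 0 is irrelevant and never *)
(* used), complete for v, with finite residue field of size q.         *)
Section LocalField.
Variables (K : fieldType) (v : K -> int).

Definition inO (x : K) : Prop := x = 0 \/ (0 <= v x)%R.
Definition unitO (x : K) : Prop := x <> 0 /\ v x = 0.
Definition divpow (k : int) (x : K) : Prop := x = 0 \/ (k <= v x)%R.
Definition congrv (a b : K) : Prop := divpow 1 (a - b).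

Definition is_discrete_valuation : Prop :=
  [/\ (forall x y, x != 0 -> y != 0 -> v (x * y) = v x + v y),
      (forall x y, x != 0 -> y != 0 -> x + y != 0 ->
          Num.min (v x) (v y) <= v (x + y)) &
      (exists w : K, w != 0 /\ v w = 1) ].

Definition v_cauchy (s : nat -> K) : Prop :=
  forall k : int, exists n0 : nat, forall n p : nat,
    (n0 <= n)%N -> (n0 <= p)%N -> divpow k (s n - s p).
Definition v_converges (s : nat -> K) (l : K) : Prop :=
  forall k : int, exists n0 : nat, forall n : nat, (n0 <= n)%N -> divpow k (s n - l).
Definition v_complete : Prop :=
  forall s, v_cauchy s -> exists l, v_converges s l.

Definition num_classes_mod (P : K -> Prop) (n : nat) : Prop :=
  exists s : seq K, [/\ size s = n,
    (forall i, (i < n)%N -> P (nth 0 s i)),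
    (forall i j, (i < n)%N -> (j < n)%N -> congrv (nth 0 s i) (nth 0 s j) -> i = j) &
    (forall t, P t -> exists2 i, (i < n)%N & congrv t (nth 0 s i)) ].

Definition nonarch_local_field (q : nat) : Prop :=
  [/\ is_discrete_valuation, v_complete & num_classes_mod inO q].

Definition absv (R : realType) (q : nat) (x : K) : R :=
  if x == 0 then 0 else (q%:R : R) ^ (- v x).

(* balls a + varpi^k O_F; they generate the Borel sigma-algebra *)
Definition vballs : set (set K) :=
  [set B | exists (a : K) (k : int), B = [set x | divpow k (x - a)]].

End LocalField.

Definition Kpt (K : fieldType) : Type := K.
HB.instance Definition _ (K : fieldType) := Choice.on (Kpt K).
HB.instance Definition _ (K : fieldType) := isPointed.Build (Kpt K) (0 : K).
Notation Kmeas v := (g_sigma_algebraType (vballs v : set (set (Kpt _)))).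

Section Matrices.
Variables (K : fieldType) (v : K -> int).

Definition mat2 (a b c d : K) : 'M[K]_2 :=
  \matrix_(i < 2, j < 2) nth 0 (nth [::] [:: [:: a; b]; [:: c; d]] i) j.

Definition gamma_mu (m u : K) : 'M[K]_2 := mat2 0 1 (- u) m.

Definition gxy (x y : K) : 'M[K]_2 := mat2 1 x 0 y.

Definition in_Ke (e : nat) (A : 'M[K]_2) : Prop :=
  [/\ (forall i j, inO v (A i j)), unitO v (\det A) & divpow v e%:Z (A 1 0)].

Definition in_ZKe (e : nat) (A : 'M[K]_2) : Prop :=
  exists z : K, z != 0 /\ in_Ke e (z *: A).

Definition phi_v (R : realType) (e : nat) (A : 'M[K]_2) : R :=
  \1_[set B | in_ZKe e B] A.

(* the right-hand side; f_v = val(disc) with disc = m^2 - 4u, f_v = +oo if disc = 0 *)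
Definition lemma3p6_bound (R : realType) (q N e : nat) (disc : K) : \bar R :=
  if disc == 0 then +oo%E
  else if (e == 0)%N && (v disc == 0) then ((q%:R - 1 + N%:R) / q%:R)%:E
  else (4 * (q%:R : R) `^ ((v disc)%:~R / 2 - e%:R))%:E.

End Matrices.

(* Main.v *)
Require Import Defs.
From HB Require Import structures.
From mathcomp Require Import all_boot all_order all_algebra.
From mathcomp Require Import all_classical all_reals all_analysis.
From mathcomp Require Import zify ring lra.
Import Order.TTheory GRing.Theory Num.Theory.
Local Open Scope classical_set_scope.
Local Open Scope ring_scope.

Lemma int_half (t : int) : exists j : int, t <= 2 * j <= t + 1.
Proof.
exists ((t + 1) %/ 2)%Z.
have := divz_eq (t + 1) 2; have := modz_ge0 (t + 1) (isT : (2:int) != 0).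
have := ltz_pmod (t+1) (isT : (0 < (2:int))).
lia.
Qed.

Section M.
Variable K : fieldType.
Lemma mat2E (a b c d : K) i j : mat2 a b c d i j =
  if (i == 0 :> nat) then (if (j == 0 :> nat) then a else b) else (if (j == 0 :> nat) then c else d).
Proof.
rewrite /mat2 mxE.
by case: i => [[|[|i]] Hi] //; case: j => [[|[|j]] Hj].
Qed.

Lemma det_mat2 (a b c d : K) : \det (mat2 a b c d) = a * d - b * c.
Proof.
rewrite (expand_det_row _ 0) !big_ord_recr big_ord0 /= /cofactor !det_mx11 /= !mxE /=. ring. Qed.

Lemma mat2_mul (a b c d a' b' c' d' : K) :
  mat2 a b c d *m mat2 a' b' c' d' =
  mat2 (a * a' + b * c') (a * b' + b * d') (c * a' + d * c') (c * b' + d * d').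
Proof.
apply/matrixP => i j; rewrite !mxE !big_ord_recr big_ord0 /= !mxE.
by case: i => [[|[|i]] Hi] //; case: j => [[|[|j]] Hj] //=; rewrite add0r.
Qed.

Lemma mat2_scale (z a b c d : K) : z *: mat2 a b c d = mat2 (z * a) (z * b) (z * c) (z * d).
Proof.
apply/matrixP => i j; rewrite !mxE.
by case: i => [[|[|i]] Hi] //; case: j => [[|[|j]] Hj].
Qed.

Lemma mat2_1 : mat2 1 0 0 1 = 1%:M :> 'M[K]_2.
Proof.
apply/matrixP => i j; rewrite !mxE.
by case: i => [[|[|i]] Hi] //; case: j => [[|[|j]] Hj].
Qed.

Lemma inv_gxy (x y : K) : y != 0 -> invmx (gxy x y) = mat2 1 (- (x / y)) 0 y^-1.
Proof.
move=> y0.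
have h : gxy x y *m mat2 1 (- (x / y)) 0 y^-1 = 1%:M.
  rewrite /gxy mat2_mul -mat2_1; congr mat2; field; done.
have [hu _] := mulmx1_unit h.
by rewrite -[RHS]mul1mx -(mulVmx hu) -mulmxA h mulmx1.
Qed.
End M.


Lemma le_int_nonneg d (T : measurableType d) (R : realType)
  (mu : {measure set T -> \bar R}) (D : set T) (f g : T -> \bar R) :
  (forall x, D x -> (0 <= f x)%E) -> (forall x, D x -> (f x <= g x)%E) ->
  (\int[mu]_(x in D) f x <= \int[mu]_(x in D) g x)%E.
Proof.
move=> f0 fg.
have g0 : forall x, D x -> (0 <= g x)%E by move=> x Dx; apply: le_trans (f0 x Dx) (fg x Dx).
rewrite !ge0_integralE //; apply: ereal_sup_le => _ [h hf <-]; exists h => //= x.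
by apply: le_trans (hf x) (lee_restrict fg x).
Qed.

Lemma mem_bigU (T : Type) (I : eqType) (cs : seq I) (F : I -> set T) x :
  (exists2 c, c \in cs & F c x) -> (\big[setU/set0]_(c <- cs) F c) x.
Proof.
elim: cs => [[c]|c cs IH [c' hc' hF]]; first by rewrite in_nil.
rewrite big_cons; move: hc'; rewrite in_cons => /orP[/eqP <-|h]; first by left.
by right; apply: IH; exists c'.
Qed.


Lemma series_le (R : realType) (t : nat -> R) (Bd : R) : (forall i, 0 <= t i) ->
  (forall n, \sum_(i < n) t i <= Bd) -> (\sum_(i <oo) (t i)%:E <= Bd%:E)%E.
Proof.
move=> t0 hb.
apply: lime_le; first by apply: is_cvg_nneseries => n _ _; rewrite lee_fin.
apply: nearW => n; rewrite sumEFin lee_fin big_mkord; exact: hb.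
Qed.

Lemma geom_sum (R : realType) (r : R) n :
  \sum_(i < n) (1 - r) * r ^+ i = 1 - r ^+ n.
Proof.
elim: n => [|n IH]; first by rewrite big_ord0 expr0 subrr.
rewrite big_ord_recr /= IH exprSr; ring.
Qed.

Section Val.
Variables (K : fieldType) (v : K -> int).
Hypothesis Hv : is_discrete_valuation v.

Ltac vgen := repeat match goal with
 | H : context [v ?x] |- _ => let t := fresh "t" in set (t := v x) in *
 | |- context [v ?x] => let t := fresh "t" in set (t := v x) in *
 end;
 repeat match goal with
 | a := v ?x, b := v ?y |- _ => unify x y; change b with a in *; clear b
 end.
Ltac vlia := vgen; lia.


Lemma vM x y : x != 0 -> y != 0 -> v (x * y) = v x + v y.
Proof. by case: Hv => h _ _; apply: h. Qed.
Arguments vM {x y}.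

Lemma vDmin x y : x != 0 -> y != 0 -> x + y != 0 -> Num.min (v x) (v y) <= v (x + y).
Proof. by case: Hv => _ h _; apply: h. Qed.
Arguments vDmin {x y}.

Lemma v1 : v 1 = 0.
Proof. have := @vM 1 1 (oner_neq0 K) (oner_neq0 K); rewrite mulr1; vlia. Qed.

Lemma vV x : x != 0 -> v x^-1 = - v x.
Proof.
move=> x0; have := @vM x x^-1 x0 (invr_neq0 x0); rewrite mulfV // v1; vlia.
Qed.

Lemma vN1 : v (-1) = 0.
Proof.
have n1 : (-1 : K) != 0 by rewrite oppr_eq0 oner_neq0.
have := @vM (-1) (-1) n1 n1; rewrite mulrNN mulr1 v1; vlia.
Qed.

Lemma vN x : v (- x) = v x.
Proof.
have [->|x0] := eqVneq x 0; first by rewrite oppr0.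
have n1 : (-1 : K) != 0 by rewrite oppr_eq0 oner_neq0.
by rewrite -mulN1r vM // vN1 add0r.
Qed.

Lemma vX x n : x != 0 -> v (x ^+ n) = v x * n%:Z.
Proof.
move=> x0; elim: n => [|n IH]; first by rewrite expr0 v1 mulr0.
rewrite exprS vM ?expf_neq0 // IH; vlia.
Qed.

Lemma vXz x (j : int) : x != 0 -> v (x ^ j) = v x * j.
Proof.
move=> x0; case: j => n.
  by rewrite /exprz vX.
rewrite NegzE /exprz vV ?expf_neq0 // vX //; vlia.
Qed.

Lemma divpowP k x : divpow v k x <-> (x != 0 -> k <= v x).
Proof.
split; first by case=> [->|h]; rewrite ?eqxx.
by move=> h; have [->|x0] := eqVneq x 0; [left|right; apply: h].
Qed.

Lemma divpow0 k : divpow v k 0.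
Proof. by left. Qed.

Lemma divpowD k a b : divpow v k a -> divpow v k b -> divpow v k (a + b).
Proof.
move=> /divpowP ha /divpowP hb; apply/divpowP => ab0.
have [a0|a0] := eqVneq a 0; first by move: ab0; rewrite a0 add0r; apply: hb.
have [b0|b0] := eqVneq b 0; first by move: ab0; rewrite b0 addr0; apply: ha.
apply: le_trans (vDmin a0 b0 ab0); rewrite le_min.
by rewrite (ha a0) (hb b0).
Qed.
Arguments divpowD {k a b}.

Lemma divpowN k a : divpow v k a -> divpow v k (- a).
Proof. by move=> /divpowP h; apply/divpowP; rewrite oppr_eq0 vN. Qed.
Arguments divpowN {k a}.

Lemma divpowB k a b : divpow v k a -> divpow v k b -> divpow v k (a - b).
Proof. by move=> ha hb; apply: divpowD => //; apply: divpowN. Qed.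
Arguments divpowB {k a b}.

Lemma divpowM k l a b : divpow v k a -> divpow v l b -> divpow v (k + l) (a * b).
Proof.
move=> /divpowP ha /divpowP hb; apply/divpowP; rewrite mulf_eq0 negb_or => /andP[a0 b0].
rewrite vM //; have := ha a0; have := hb b0; vlia.
Qed.
Arguments divpowM {k l a b}.

Lemma divpow_le k l a : l <= k -> divpow v k a -> divpow v l a.
Proof. move=> lk /divpowP h; apply/divpowP => /h; vlia. Qed.

Lemma divpow_v a : divpow v (v a) a.
Proof. by apply/divpowP. Qed.

Lemma divpow1 : divpow v 0 1.
Proof. by right; rewrite v1. Qed.

Lemma divpow_nat n : divpow v 0 (n%:R).
Proof.
elim: n => [|n IH]; first by left.
by rewrite -addn1 natrD; apply: divpowD => //; exact: divpow1.
Qed.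

Lemma divpow_contra a k : a != 0 -> divpow v k a -> k <= v a.
Proof. by move=> a0 /divpowP; apply. Qed.
Arguments divpow_contra {a k}.

Lemma v_strict a b k : a != 0 -> v a = k -> divpow v (k + 1) b ->
  a + b != 0 /\ v (a + b) = k.
Proof.
move=> a0 va hb.
have ab0 : a + b != 0.
  apply/negP => /eqP ab; have bE : b = - a by apply/eqP; rewrite -subr_eq0 opprK addrC ab.
  have b0 : b != 0 by rewrite bE oppr_eq0.
  have := divpow_contra b0 hb; rewrite bE vN; vlia.
split => //.
have h1 : divpow v k (a + b).
  by apply: divpowD; [rewrite -va; apply: divpow_v|apply: divpow_le hb; lia].
have h1' := divpow_contra ab0 h1.
have h2 : a = (a + b) - b by rewrite addrK.
have [e|ne] := eqVneq (v (a + b)) k => //.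
have h3 : divpow v (k + 1) ((a + b) - b).
  apply: divpowB => //; apply/divpowP => _; vlia.
rewrite -h2 in h3; have := divpow_contra a0 h3; vlia.
Qed.
Arguments v_strict {a b k}.

Section Quad.
Variables (m u : K).
Hypothesis Hu : unitO v u.

Definition Pw (w : K) := u * w ^+ 2 - m * w + 1.
Definition Dd := m ^+ 2 - 4%:R * u.

Lemma ident1 w w' : Dd * (w - w') ^+ 2 = u ^+ 2 * (w - w') ^+ 4 +
  ((Pw w - Pw w') ^+ 2 - 2%:R * u * (Pw w + Pw w') * (w - w') ^+ 2).
Proof. rewrite /Dd /Pw; ring. Qed.

Lemma ident3 w1 w2 w3 : u * (w1 - w2) * (w1 - w3) * (w2 - w3) =
  Pw w1 * (w2 - w3) - Pw w2 * (w1 - w3) + Pw w3 * (w1 - w2).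
Proof. rewrite /Pw; ring. Qed.

Let u0 : u != 0. Proof. by case: Hu => /eqP. Qed.
Let vu : v u = 0. Proof. by case: Hu. Qed.

Lemma divpow_Y k w w' : divpow v k (Pw w) -> divpow v k (Pw w') ->
  divpow v (Num.min (k + k) (k + 2 * v (w - w')))
   ((Pw w - Pw w') ^+ 2 - 2%:R * u * (Pw w + Pw w') * (w - w') ^+ 2).
Proof.
move=> h1 h2.
have hd : divpow v (k + k) ((Pw w - Pw w') ^+ 2).
  by rewrite expr2; apply: divpowM => //; apply: divpowB.
have he : divpow v (0 + 0 + k + (v (w - w') + v (w - w')))
   (2%:R * u * (Pw w + Pw w') * (w - w') ^+ 2).
  rewrite expr2; apply: divpowM; last by apply: divpowM; apply: divpow_v.
  apply: divpowM; last by apply: divpowD.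
  apply: divpowM; first exact: divpow_nat.
  by rewrite -vu; apply: divpow_v.
apply: divpowB.
  by apply: divpow_le hd; rewrite ge_min lexx.
by apply: divpow_le he; rewrite ge_min; apply/orP; right; vlia.
Qed.
Arguments divpow_Y {k w w'}.

Lemma vA4 w w' : w != w' -> v (u ^+ 2 * (w - w') ^+ 4) = 4 * v (w - w').
Proof.
move=> ww; have d0 : w - w' != 0 by rewrite subr_eq0.
rewrite vM ?expf_neq0 // !vX // vu; vlia.
Qed.
Arguments vA4 {w w'}.

Lemma vDd2 w w' : w != w' -> Dd != 0 -> v (Dd * (w - w') ^+ 2) = v Dd + 2 * v (w - w').
Proof.
move=> ww D0; have d0 : w - w' != 0 by rewrite subr_eq0.
rewrite vM ?expf_neq0 // vX //; vlia.
Qed.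
Arguments vDd2 {w w'}.

Lemma L1 k w w' : divpow v k (Pw w) -> divpow v k (Pw w') -> w != w' ->
  2 * v (w - w') < k -> Dd != 0 /\ v Dd = 2 * v (w - w').
Proof.
move=> h1 h2 ww lt.
have d0 : w - w' != 0 by rewrite subr_eq0.
have a0 : u ^+ 2 * (w - w') ^+ 4 != 0 by rewrite mulf_neq0 ?expf_neq0.
have hY := divpow_Y h1 h2.
have hY' : divpow v (4 * v (w - w') + 1)
   ((Pw w - Pw w') ^+ 2 - 2%:R * u * (Pw w + Pw w') * (w - w') ^+ 2).
  by apply: divpow_le hY; rewrite le_min; apply/andP; split; vlia.
have [nz vv] := v_strict a0 (vA4 ww) hY'.
rewrite -ident1 in nz vv.
have D0 : Dd != 0 by move: nz; rewrite mulf_eq0 negb_or => /andP[].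
split => //; move: vv; rewrite vDd2 //; set b := v (w - w'); vlia. Qed.
Arguments L1 {k w w'}.

Lemma L2 k w w' : Dd != 0 -> v Dd < k ->
  divpow v k (Pw w) -> divpow v k (Pw w') -> w != w' ->
  k <= 2 * v (w - w') -> 2 * k <= v Dd + 2 * v (w - w').
Proof.
move=> D0 fk h1 h2 ww le; rewrite leNgt; apply/negP => lt.
have d0 : w - w' != 0 by rewrite subr_eq0.
have hY := divpow_Y h1 h2.
have hs : divpow v (v Dd + 2 * v (w - w') + 1) (Dd * (w - w') ^+ 2).
  rewrite ident1; apply: divpowD.
    by apply/divpowP => _; rewrite vA4 //; vlia.
  by apply: divpow_le hY; rewrite le_min; apply/andP; split; vlia.
have nz : Dd * (w - w') ^+ 2 != 0 by rewrite mulf_neq0 ?expf_neq0.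
have := divpow_contra nz hs; rewrite vDd2 //; vlia.
Qed.
Arguments L2 {k w w'}.

Lemma L3 k w1 w2 w3 : v Dd < k ->
  divpow v k (Pw w1) -> divpow v k (Pw w2) -> divpow v k (Pw w3) ->
  w1 != w2 -> w1 != w3 -> w2 != w3 ->
  2 * v (w1 - w2) = v Dd -> 2 * v (w1 - w3) = v Dd -> 2 * v (w2 - w3) = v Dd ->
  False.
Proof.
move=> fk h1 h2 h3 n12 n13 n23 e12 e13 e23.
have d12 : w1 - w2 != 0 by rewrite subr_eq0.
have d13 : w1 - w3 != 0 by rewrite subr_eq0.
have d23 : w2 - w3 != 0 by rewrite subr_eq0.
have nz : u * (w1 - w2) * (w1 - w3) * (w2 - w3) != 0 by rewrite !mulf_neq0.
have hv : v (u * (w1 - w2) * (w1 - w3) * (w2 - w3)) =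
   v (w1 - w2) + v (w1 - w3) + v (w2 - w3).
  by rewrite !vM ?mulf_neq0 // vu; vlia.
have hr : divpow v (k + v (w1 - w2))
   (u * (w1 - w2) * (w1 - w3) * (w2 - w3)).
  rewrite ident3; apply: divpowD; first apply: divpowB.
  - by apply: divpowM => //; apply/divpowP => _; vlia.
  - by apply: divpowM => //; apply/divpowP => _; vlia.
  - by apply: divpowM => //; apply/divpowP => _; vlia.
have := divpow_contra nz hr; rewrite hv; vlia.
Qed.
Arguments L3 {k w1 w2 w3}.

Lemma divpow_sym k a b : divpow v k (a - b) -> divpow v k (b - a).
Proof. by move=> h; rewrite -opprB; apply: divpowN. Qed.

Lemma cover k : Dd != 0 -> exists w1 w2 (j : int), 2 * k - v Dd <= 2 * j /\
  forall w, divpow v k (Pw w) -> divpow v j (w - w1) \/ divpow v j (w - w2).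
Proof.
move=> D0.
have [[w1 hw1]|none] := pselect (exists w, divpow v k (Pw w)); last first.
  have [j /andP[j1 _]] := int_half (2 * k - v Dd).
  exists 0, 0, j; split; first by vlia.
  by move=> w hw; exfalso; apply: none; exists w.
have [kf|fk] := leP k (v Dd).
  have [j /andP[j1 j2]] := int_half k.
  exists w1, w1, j; split; first by vlia.
  move=> w hw; left.
  have [->|ww] := eqVneq w w1; first by rewrite subrr; left.
  apply/divpowP => _.
  have [lt|ge] := ltP (2 * v (w - w1)) k.
    have [_ e] := L1 hw hw1 ww lt; vlia.
  vlia.
have [j /andP[j1 j2]] := int_half (2 * k - v Dd).
have far : forall w w', divpow v k (Pw w) -> divpow v k (Pw w') ->
    ~ divpow v j (w - w') -> w != w' /\ 2 * v (w - w') = v Dd.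
  move=> w w' hw hw' nd.
  have ww : w != w' by apply/eqP => e; apply: nd; rewrite e subrr; left.
  split => //.
  have d0 : w - w' != 0 by rewrite subr_eq0.
  have lt : v (w - w') < j.
    by rewrite ltNge; apply/negP => le; apply: nd; apply/divpowP.
  have [lt2|ge] := ltP (2 * v (w - w')) k.
    by have [_ e] := L1 hw hw' ww lt2.
  have := L2 D0 fk hw hw' ww ge; vlia.
have [[w2 [hw2 nd2]]|none2] :=
  pselect (exists w2, divpow v k (Pw w2) /\ ~ divpow v j (w2 - w1)).
  exists w1, w2, j; split; first by vlia.
  move=> w hw.
  have [a|na] := pselect (divpow v j (w - w1)); first by left.
  have [b|nb] := pselect (divpow v j (w - w2)); first by right.
  exfalso.
  have [n21 e21] := far _ _ hw2 hw1 nd2.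
  have [n1 e1] := far _ _ hw hw1 na.
  have [n2 e2] := far _ _ hw hw2 nb.
  apply: (L3 fk hw1 hw2 hw).
  - by rewrite eq_sym.
  - by rewrite eq_sym.
  - by rewrite eq_sym.
  - by rewrite -opprB vN.
  - by rewrite -opprB vN.
  - by rewrite -opprB vN.
exists w1, w1, j; split; first by vlia.
move=> w hw; left.
have [a|na] := pselect (divpow v j (w - w1)) => //.
by exfalso; apply: none2; exists w.
Qed.

Lemma cover0 k w w' : v Dd = 0 -> Dd != 0 -> 1 <= k ->
  divpow v k (Pw w) -> divpow v k (Pw w') -> divpow v 1 (w - w') ->
  divpow v k (w - w').
Proof.
move=> f0 D0 k1 h1 h2 h.
have [->|ww] := eqVneq w w'; first by rewrite subrr; left.
have d0 : w - w' != 0 by rewrite subr_eq0.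
have d1 := divpow_contra d0 h.
apply/divpowP => _.
have [lt|ge] := ltP (2 * v (w - w')) k.
  have [_ e] := L1 h1 h2 ww lt; vlia.
have fk : v Dd < k by rewrite f0; lia.
have := L2 D0 fk h1 h2 ww ge; vlia.
Qed.


Lemma A_form (e : nat) x y z : y != 0 ->
  z *: (invmx (gxy x y) *m gamma_mu m u *m gxy x y) =
  mat2 (z * u * (x / y)) (z * y * Pw (x / y)) (- (z * u) / y) (z * (m - u * (x / y))).
Proof.
move=> y0; rewrite inv_gxy // /gamma_mu /gxy !mat2_mul mat2_scale.
congr mat2; rewrite /Pw; field; done.
Qed.

Lemma ZKe_cond (e : nat) x y : y != 0 ->
  in_ZKe v e (invmx (gxy x y) *m gamma_mu m u *m gxy x y) ->
  [/\ (e%:Z <= - v y), inO v (x / y) & divpow v (- v y) (Pw (x / y))].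
Proof.
move=> y0 [z [z0 hK]]; move: hK; rewrite (A_form e) //.
case=> hint hdet hdiv.
have ez : v z = 0.
  move: hdet; rewrite det_mat2.
  have -> : z * u * (x / y) * (z * (m - u * (x / y))) -
      z * y * Pw (x / y) * (- (z * u) / y) = z ^+ 2 * u.
    rewrite /Pw; field; done.
  case=> _; rewrite vM ?expf_neq0 // vX // vu; vlia.
have h00 := hint 0 0; have h01 := hint 0 1.
rewrite !mxE /= in h00 h01 hdiv.
split.
- move: hdiv => /divpowP; rewrite mulNr oppr_eq0 vN.
  have nz : z * u / y != 0 by rewrite !mulf_neq0 ?invr_eq0.
  move=> /(_ nz); rewrite !vM ?mulf_neq0 ?invr_eq0 // vV // ez vu; vlia.
- have [w0|w0] := eqVneq (x / y) 0; first by left.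
  right; case: h00 => [|h]; first by move/eqP; rewrite !mulf_eq0 (negbTE z0) (negbTE u0) -mulf_eq0 (negbTE w0).
  have zu0 : z * u != 0 by rewrite mulf_neq0.
  have := @vM (z * u) (x / y) zu0 w0; have := @vM z u z0 u0; move: h; vlia.
- have [p0|p0] := eqVneq (Pw (x / y)) 0; first by rewrite p0; left.
  right; case: h01 => [|h]; first by move/eqP; rewrite !mulf_eq0 (negbTE z0) (negbTE y0) (negbTE p0).
  have zy0 : z * y != 0 by rewrite mulf_neq0.
  have := @vM (z * y) (Pw (x / y)) zy0 p0; have := @vM z y z0 y0; move: h; vlia.
Qed.


Lemma divpow_scale k c a : c != 0 -> divpow v k (c * a) -> divpow v (k - v c) a.
Proof.
move=> c0 h; apply/divpowP => a0.
have := divpow_contra (mulf_neq0 c0 a0) h; rewrite vM //; vlia.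
Qed.
Arguments divpow_scale {k c a}.

Section Meas.
Variables (R : realType) (q : nat) (mu : {measure set (Kmeas v) -> \bar R}).
Hypothesis Hcl : num_classes_mod v (inO v) q.
Hypothesis Htr : forall (a : K) (A : set (Kmeas v)), measurable A ->
      mu [set x : Kmeas v | A ((x : K) + a)] = mu A.
Hypothesis Hmu1 : mu (inO v : set (Kmeas v)) = 1%E.

Definition ball (c : K) (j : int) : set (Kmeas v) :=
  [set x : Kmeas v | divpow v j ((x : K) - c)].

Lemma mball c j : measurable (ball c j).
Proof. by apply: sub_sigma_algebra; exists c, j. Qed.

Lemma mu_ball_tr c j : mu (ball c j) = mu (ball 0 j).
Proof.
rewrite -(@Htr c _ (mball c j)); congr (mu _).
by apply/seteqP; split => x; rewrite /ball /= addrK subr0.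
Qed.

Lemma ball00 : ball 0 0 = inO v.
Proof. by apply/seteqP; split => x; rewrite /ball /= subr0. Qed.

Lemma q_ge2 : (1 < q)%N.
Proof.
case: Hcl => s [ss hin hinj hcov].
have [i0 i0q h0] := hcov 0 (or_introl erefl).
have [i1 i1q h1] : exists2 i, (i < q)%N & congrv v 1 (nth 0 s i).
  by apply: hcov; right; rewrite v1.
have ne : i0 != i1.
  apply/eqP => e; subst i1.
  have := divpowB h1 h0; rewrite (_ : 1 - nth 0 s i0 - (0 - nth 0 s i0) = 1); last by ring.
  move=> /(divpow_contra (oner_neq0 K)); rewrite v1; lia.
lia.
Qed.

Lemma mu_split j : mu (ball 0 j) = (\sum_(i < q) mu (ball 0 (j + 1)))%E.
Proof.
case: Hcl => s [ss hin hinj hcov].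
have [pi [pi0 vpi]] : exists p : K, p != 0 /\ v p = 1 by case: Hv.
have pj0 : pi ^ j != 0 := expfz_neq0 _ pi0.
have vpj : v (pi ^ j) = j by rewrite vXz // vpi mul1r.
pose F := fun i : nat => if (i < q)%N then ball (pi ^ j * nth 0 s i) (j + 1) else set0.
have mF : forall i, measurable (F i).
  by move=> i; rewrite /F; case: ifP => _; [apply: mball|apply: measurable0].
have tF : trivIset setT F.
  move=> a b _ _ [x []]; rewrite /F.
  case: ifP => aq; last by [].
  case: ifP => bq; last by [].
  rewrite /ball /= => ha hb.
  have := divpowB ha hb.
  rewrite (_ : x - pi ^ j * nth 0 s a - (x - pi ^ j * nth 0 s b) =
     pi ^ j * (nth 0 s b - nth 0 s a)); last by ring.
  move=> /(divpow_scale pj0); rewrite vpj (_ : j + 1 - j = 1); last by lia.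
  move=> h; apply: esym; apply: hinj => //.
have eqF : ball 0 j = \big[setU/set0]_(i < q) F i.
  rewrite -bigcup_mkord; apply/seteqP; split => x /=.
  - rewrite /ball /= subr0 => hx.
    have hx' : inO v (x / pi ^ j).
      have := divpowM hx (divpow_v ((pi ^ j)^-1)); rewrite vV // vpj addrN.
      by [].
    have [i iq hc] := hcov _ hx'.
    exists i => //; rewrite /F iq /ball /=.
    rewrite (_ : x - pi ^ j * nth 0 s i = pi ^ j * (x / pi ^ j - nth 0 s i)); last first.
      by field.
    have hp := divpow_v (pi ^ j); rewrite vpj in hp.
    by apply: divpowM.
  - move=> [i /= iq]; rewrite /F iq /ball /= subr0 => hx.
    rewrite (_ : x = (x - pi ^ j * nth 0 s i) + pi ^ j * nth 0 s i); last by ring.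
    apply: divpowD; first by apply: divpow_le hx; lia.
    have hp := divpow_v (pi ^ j); rewrite vpj in hp.
    by have := divpowM hp (hin i iq); rewrite addr0.
rewrite eqF measure_bigsetU //; apply: eq_bigr => i _.
by rewrite /F ltn_ord; apply: mu_ball_tr.
Qed.


Let qR : R := q%:R.
Let q0 : qR != 0.
Proof. by rewrite /qR pnatr_eq0; have := q_ge2; case: q. Qed.
Let qgt0 : 0 < qR.
Proof. by rewrite /qR ltr0n; have := q_ge2; case: q. Qed.

Lemma mu_ballN (n : nat) : mu (ball 0 (- n%:Z)) = (qR ^+ n)%:E.
Proof.
elim: n => [|n IH]; first by rewrite oppr0 expr0 ball00 Hmu1.
rewrite mu_split (_ : - (n.+1)%:Z + 1 = - n%:Z); last by lia.
rewrite IH sumEFin sumr_const card_ord exprSr mulr_natr.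
by [].
Qed.

Lemma mu_ballP (n : nat) : mu (ball 0 n%:Z) = ((qR ^+ n)^-1)%:E.
Proof.
elim: n => [|n IH]; first by rewrite expr0 invr1 ball00 Hmu1.
have sub : ball 0 n.+1 `<=` ball 0 n.
  by move=> x; rewrite /ball /=; apply: divpow_le; lia.
have le := le_measure mu (mem_set (mball 0 n.+1)) (mem_set (mball 0 n)) sub.
have fin : mu (ball 0 n.+1) \is a fin_num.
  have lt : (mu (ball 0 n) < +oo)%E by rewrite IH ltry.
  rewrite ge0_fin_numE ?measure_ge0 //; exact: le_lt_trans le lt.
have := mu_split n; rewrite (_ : n%:Z + 1 = n.+1%:Z); last by lia.
rewrite IH -(fineK fin) sumEFin sumr_const card_ord => -[] e.
congr EFin; rewrite exprSr.
have qn0 : qR ^+ n != 0 by rewrite expf_neq0.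
move: e; rewrite -mulr_natr -/qR => e.
rewrite invfM e mulfK //.
Qed.

Lemma mu_ball c j : mu (ball c j) = (qR ^ (- j))%:E.
Proof.
rewrite mu_ball_tr; case: j => n.
  by rewrite mu_ballP -exprnN.
by rewrite NegzE opprK mu_ballN.
Qed.

Definition ann (k : int) : set (Kmeas v) := ball 0 (- k) `\` ball 0 (- k + 1).

Lemma ann_mem k (y : Kmeas v) : ((y : K) != 0 /\ v y = - k) -> ann k y.
Proof.
move=> [y0 vy]; split; rewrite /ball /= subr0.
  by right; rewrite vy.
by case=> [e|h]; [move: y0; rewrite e eqxx|move: h; rewrite vy; lia].
Qed.

Lemma mann k : measurable (ann k).
Proof. by apply: measurableD; apply: mball. Qed.

Lemma mu_ann k : mu (ann k) = (qR ^ k * (1 - qR^-1))%:E.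
Proof.
have sub : ball 0 (- k + 1) `<=` ball 0 (- k).
  by move=> x; rewrite /ball /=; apply: divpow_le; lia.
rewrite /ann measureD; [|exact: mball|exact: mball|by change (mu (ball 0 (- k)) < +oo)%E; rewrite mu_ball ltry].
change ((mu (ball 0 (- k)) - mu (ball 0 (- k) `&` ball 0 (- k + 1)))%E =
  (qR ^ k * (1 - qR^-1))%:E).
rewrite (setIidr sub) !mu_ball opprK.
rewrite -EFinB; congr EFin.
rewrite (_ : - (- k + 1) = k + (-1)); last by lia.
rewrite expfzDr // (_ : qR ^ (-1) = qR^-1); last by rewrite -exprnN expr1.
ring.
Qed.

Lemma mu_cover (cs : seq K) j :
  (mu (\big[setU/set0]_(c <- cs) ball c j) <= ((size cs)%:R * qR ^ (- j))%:E)%E.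
Proof.
elim: cs => [|c cs IH]; first by rewrite big_nil measure0 mul0r.
rewrite big_cons.
apply: le_trans (measureU2 _ (mball _ _) (bigsetU_measurable _ _)) _.
  by move=> i _; apply: mball.
change (mu (ball c j) + mu (\big[setU/set0]_(c <- cs) ball c j) <=
   ((size (c :: cs))%:R * qR ^ (- j))%:E)%E.
rewrite mu_ball /= -addn1 natrD mulrDl mul1r EFinD addrC.
by apply: leeD2r.
Qed.


Definition phiA (e : nat) (x y : K) : R :=
  phi_v v R e (invmx (gxy x y) *m gamma_mu m u *m gxy x y).

Lemma phiA_ge0 e x y : 0 <= phiA e x y.
Proof. by rewrite /phiA /phi_v indicE ler0n. Qed.

Lemma inner_le e (y : K) (cs : seq K) (j : int) : y != 0 ->
  (forall w, inO v w -> divpow v (- v y) (Pw w) ->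
     exists2 c, c \in cs & divpow v j (w - c)) ->
  (\int[mu]_(x in [set: Kmeas v]) (phiA e x y)%:E <=
     ((size cs)%:R * qR ^ (- (j + v y)))%:E)%E.
Proof.
move=> y0 hc.
pose T := \big[setU/set0]_(c <- [seq c * y | c <- cs]) ball c (j + v y).
have mT : measurable T by apply: bigsetU_measurable => c _; apply: mball.
have step : (\int[mu]_(x in [set: Kmeas v]) (phiA e x y)%:E <=
    \int[mu]_(x in [set: Kmeas v]) (\1_T x)%:E)%E.
  apply: le_int_nonneg => x _; first by rewrite lee_fin phiA_ge0.
  rewrite lee_fin /phiA /phi_v !indicE.
  have [hZ|hZ] := pselect (in_ZKe v e (invmx (gxy x y) *m gamma_mu m u *m gxy x y)); last first.
    by rewrite memNset.
  rewrite mem_set //.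
  have hT : T x.
    apply: mem_bigU; have [he hO hP] := ZKe_cond _ _ _ y0 hZ.
    have [c hc1 hc2] := hc _ hO hP.
    exists (c * y); first by apply: map_f.
    rewrite /ball /=.
    rewrite (_ : (x : K) - c * y = ((x : K) / y - c) * y); last by field.
    by apply: divpowM => //; apply: divpow_v.
  by rewrite mem_set.
apply: le_trans step _.
rewrite integral_indic // setIT.
apply: le_trans (mu_cover _ _) _.
by rewrite size_map.
Qed.

Lemma inner0 e (y : K) : y != 0 -> - v y < e%:Z ->
  (\int[mu]_(x in [set: Kmeas v]) (phiA e x y)%:E)%E = 0%E.
Proof.
move=> y0 lt; apply: integral0_eq => x _.
rewrite /phiA /phi_v indicE.
have [hZ|hZ] := pselect (in_ZKe v e (invmx (gxy x y) *m gamma_mu m u *m gxy x y)).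
  by have [he _ _] := ZKe_cond _ _ _ y0 hZ; exfalso; move: he lt; vlia.
by rewrite memNset.
Qed.


Definition Fy e (y : K) : \bar R :=
  ((\int[mu]_(x in [set: Kmeas v]) (phiA e x y)%:E) * ((absv v R q y) ^-2)%:E)%E.

Lemma absv_ge0 (y : K) : 0 <= absv v R q y.
Proof. by rewrite /absv; case: ifP => // _; apply: exprz_ge0; apply: ltW. Qed.

Lemma Fy_ge0 e y : (0 <= Fy e y)%E.
Proof.
apply: mule_ge0; first by apply: integral_ge0 => x _; rewrite lee_fin phiA_ge0.
by rewrite lee_fin invr_ge0 exprn_ge0 // absv_ge0.
Qed.

Lemma indic_ge0' (A : set (Kmeas v)) y : 0 <= (\1_A y : R).
Proof. by rewrite indicE ler0n. Qed.

Lemma outer_bound e (B : nat -> R) : (forall i, 0 <= B i) ->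
  (forall i : nat, exists cs j, (size cs)%:R * qR ^ (- j) <= B i /\
     forall w, inO v w -> divpow v (e%:Z + i%:Z) (Pw w) ->
       exists2 c, c \in cs & divpow v j (w - c)) ->
  (\int[mu]_(y in [set y : Kmeas v | (y : K) != 0%R]) Fy e y <=
     \sum_(i <oo) (B i * (1 - qR^-1))%:E)%E.
Proof.
move=> B0 hB.
pose c i := B i * (qR ^ (e%:Z + i%:Z))^-1.
have c0 i : 0 <= c i.
  by apply: mulr_ge0 => //; rewrite invr_ge0; apply: exprz_ge0; apply: ltW.
pose G := fun y : Kmeas v => (\sum_(i <oo) (c i * \1_(ann (e%:Z + i%:Z)) y)%:E)%E.
have G0 y : (0 <= G y)%E.
  by apply: nneseries_ge0 => i _ _; rewrite lee_fin mulr_ge0 // indic_ge0'.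
have step1 : (\int[mu]_(y in [set y : Kmeas v | (y : K) != 0%R]) Fy e y <=
    \int[mu]_(y in [set y : Kmeas v | (y : K) != 0%R]) G y)%E.
  apply: le_int_nonneg => y /= y0; first exact: Fy_ge0.
  have [lt|ge] := ltP (- v y) e%:Z.
    by rewrite /Fy inner0 // mul0e.
  have [i hi] : exists i : nat, - v y = e%:Z + i%:Z.
    exists `|(- v y - e%:Z)|%N; rewrite gez0_abs; first by lia.
    by rewrite subr_ge0.
  have [cs [j [hBi hci]]] := hB i.
  have hy : forall w, inO v w -> divpow v (- v y) (Pw w) ->
      exists2 c, c \in cs & divpow v j (w - c) by rewrite hi.
  have st : (Fy e y <= (c i)%:E)%E.
    rewrite /Fy.
    have ab0 : (0 <= ((absv v R q y) ^-2)%:E)%E.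
      by rewrite lee_fin invr_ge0 exprn_ge0 // absv_ge0.
    apply: le_trans (lee_wpmul2r ab0 (inner_le e y cs j y0 hy)) _.
    rewrite -EFinM lee_fin /absv (negbTE y0) /c -hi opprD expfzDr //.
    set P := qR ^ (- v y).
    have P0 : 0 < P by apply: exprz_gt0.
    rewrite (_ : (size cs)%:R * (qR ^ (- j) * P) * (P ^+ 2)^-1 =
       ((size cs)%:R * qR ^ (- j)) * P^-1); last first.
      by field; rewrite gt_eqF.
    by apply: ler_wpM2r => //; rewrite invr_ge0 ltW.
  apply: le_trans st _.
  rewrite /G.
  apply: le_trans (nneseries_lim_ge i.+1 _) => /=; last first.
    by move=> n _ _; rewrite lee_fin mulr_ge0 // indic_ge0'.
  rewrite big_nat_recr //= indicE mem_set; last first.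
    by apply: ann_mem; split => //; rewrite -hi opprK.
  rewrite mulr1; apply: leeDr.
  by apply: sume_ge0 => n _; rewrite lee_fin mulr_ge0 // indic_ge0'.
apply: le_trans step1 _.
have step2 : (\int[mu]_(y in [set y : Kmeas v | (y : K) != 0%R]) G y <=
    \int[mu]_(y in [set: Kmeas v]) G y)%E.
  rewrite integral_mkcond; apply: le_int_nonneg => y _.
    by rewrite /patch; case: ifP => _ //.
  by rewrite /patch; case: ifP => _ //.
apply: le_trans step2 _.
rewrite /G integral_nneseries //; last first.
  - by move=> n y _; rewrite lee_fin mulr_ge0 // indic_ge0'.
  - move=> n; apply/measurable_realfun.measurable_EFinP.
    apply: measurable_realfun.measurable_funM; first exact: measurable_cst.
    by apply: measurable_realfun.measurable_indic; apply: mann.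
apply: lee_nneseries.
  by move=> i _ _; apply: integral_ge0 => y _; rewrite lee_fin mulr_ge0 // indic_ge0'.
move=> i _.
under eq_integral do rewrite EFinM.
rewrite ge0_integralZl_EFin //.
all: try (by move=> y _; rewrite lee_fin indic_ge0').
all: try (by apply/measurable_realfun.measurable_EFinP; apply: measurable_realfun.measurable_indic; apply: mann).
rewrite integral_indic //; last exact: mann.
rewrite setIT.
change ((c i)%:E * mu (ann (e%:Z + i%:Z)) <= (B i * (1 - qR^-1))%:E)%E.
rewrite mu_ann -EFinM lee_fin /c.
rewrite le_eqVlt; apply/orP; left; apply/eqP.
have qe0 : qR ^ (e%:Z + i%:Z) != 0 by apply: expfz_neq0.
by rewrite mulrA divfK.
Qed.


Let r := qR^-1.
Let r0 : 0 <= r. Proof. by rewrite /r invr_ge0 ltW. Qed.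
Let r1 : r < 1. Proof. by rewrite /r invf_lt1 // /qR ltr1n q_ge2. Qed.
Let qpow (i : nat) : qR ^ (- i%:Z) = r ^+ i.
Proof. by rewrite -exprnN /r exprVn. Qed.

Lemma main_special e N : e = 0%N -> Dd != 0 -> v Dd = 0 ->
  num_classes_mod v (fun t => inO v t /\ congrv v (t ^+ 2 - m * t + u) 0) N ->
  (\int[mu]_(y in [set y : Kmeas v | (y : K) != 0%R]) Fy e y <=
     ((qR - 1 + N%:R) / qR)%:E)%E.
Proof.
move=> e0 D0 f0 hN.
pose B := fun i : nat => if i == 0%N then 1 else N%:R * r ^+ i.
have B0 i : 0 <= B i by rewrite /B; case: ifP => _; [|rewrite mulr_ge0 // exprn_ge0].
have hB : forall i : nat, exists cs j, (size cs)%:R * qR ^ (- j) <= B i /\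
     forall w, inO v w -> divpow v (e%:Z + i%:Z) (Pw w) ->
       exists2 c, c \in cs & divpow v j (w - c).
  move=> i; case: i => [|i].
    exists [:: 0], 0; split; first by rewrite /B /= oppr0 expr0z mulr1.
    by move=> w hw _; exists 0; [rewrite mem_seq1|rewrite subr0].
  case: hN => s [ss hin hinj hcov].
  pose P := fun l w => [/\ inO v w, divpow v (e%:Z + i.+1%:Z) (Pw w) &
                          congrv v (u * w) (nth 0 s l)].
  pose pick := fun l : nat => match pselect (exists w, P l w) with
                 | left H => projT1 (cid H) | right _ => 0 end.
  exists [seq pick l | l <- iota 0 N], (e%:Z + i.+1%:Z); split.
    by rewrite size_map size_iota /B /= e0 add0r qpow.
  move=> w hw hP.
  have ht : inO v (u * w) /\ congrv v ((u * w) ^+ 2 - m * (u * w) + u) 0.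
    split.
      have := divpowM (divpow_v u) hw; rewrite vu add0r; by [].
    rewrite /congrv subr0 (_ : (u * w) ^+ 2 - m * (u * w) + u = u * Pw w); last first.
      by rewrite /Pw; ring.
    have := divpowM (divpow_v u) hP; rewrite vu add0r => h.
    by apply: divpow_le h; rewrite e0; lia.
  have [l lN hl] := hcov _ ht.
  have ex : exists w, P l w by exists w; split.
  exists (pick l); first by apply: map_f; rewrite mem_iota add0n.
  have [pl1 pl2 pl3] : P l (pick l).
    rewrite /pick; case: pselect => [H|//]; by case: (cid H).
  have h1 : divpow v 1 (w - pick l).
    have := divpowB hl pl3.
    rewrite (_ : u * w - nth 0 s l - (u * pick l - nth 0 s l) = u * (w - pick l)); last by ring.
    by move=> /(divpow_scale u0); rewrite vu subr0.
  apply: cover0 f0 D0 _ hP pl2 h1; rewrite e0; lia.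
apply: le_trans (outer_bound e B B0 hB) _.
apply: series_le => [i|n]; first by rewrite mulr_ge0 // subr_ge0 ltW.
have q1 : 1 <= qR by rewrite /qR ler1n ltnW // q_ge2.
have N0 : 0 <= (N%:R : R) by rewrite ler0n.
have eq : (qR - 1 + N%:R) / qR = (1 - r) + N%:R * r.
  by rewrite /r mulrDl mulrBl divff //; ring.
rewrite eq.
case: n => [|n].
  by rewrite big_ord0 addr_ge0 ?mulr_ge0 // subr_ge0 ltW.
rewrite big_ord_recl /B /=.
have -> : \sum_(i < n) (if bump 0 i == 0%N then 1 else N%:R * r ^+ bump 0 i) * (1 - r)
    = N%:R * r * \sum_(i < n) (1 - r) * r ^+ i.
  rewrite big_distrr /=; apply: eq_bigr => i _; rewrite /bump /= add1n exprS; ring.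
rewrite geom_sum mul1r lerD2l.
rewrite -[leRHS]mulr1 ler_wpM2l ?mulr_ge0 //.
by rewrite gerBl exprn_ge0.
Qed.



Lemma main_general e : Dd != 0 ->
  (\int[mu]_(y in [set y : Kmeas v | (y : K) != 0%R]) Fy e y <=
     (4 * qR `^ ((v Dd)%:~R / 2 - e%:R))%:E)%E.
Proof.
move=> D0.
set C := qR `^ ((v Dd)%:~R / 2 - e%:R).
have C0 : 0 <= C by apply: powR_ge0.
have q1 : 1 <= qR by rewrite /qR ler1n ltnW // q_ge2.
pose B := fun i : nat => 2 * C * r ^+ i.
have B0 i : 0 <= B i by rewrite /B mulr_ge0 ?exprn_ge0 // mulr_ge0.
have hB : forall i : nat, exists cs j, (size cs)%:R * qR ^ (- j) <= B i /\
     forall w, inO v w -> divpow v (e%:Z + i%:Z) (Pw w) ->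
       exists2 c, c \in cs & divpow v j (w - c).
  move=> i; have [w1 [w2 [j [hj hc]]]] := cover (e%:Z + i%:Z) D0.
  exists [:: w1; w2], j; split; last first.
    move=> w _ hw; case: (hc w hw) => h; [exists w1|exists w2] => //;
      by rewrite !inE eqxx ?orbT.
  rewrite /B -mulrA; apply: ler_wpM2l => //.
  have -> : C * r ^+ i = qR `^ ((v Dd)%:~R / 2 - e%:R - i%:R).
    rewrite powRD; last by rewrite q0 implybT.
    by rewrite powRN powR_mulrn ?ltW // /r exprVn.
  rewrite -powR_intmul; last exact: ltW.
  apply: ler_powR => //.
  have hj' : ((2 * (e%:Z + i%:Z) - v Dd)%:~R <= (2 * j)%:~R :> R) by rewrite ler_int.
  move: hj'; rewrite intrB !intrM intrD intrN /=.
  set f := (v Dd)%:~R; set jj := j%:~R.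
  have -> : ((e%:Z)%:~R : R) = e%:R by [].
  have -> : ((i%:Z)%:~R : R) = i%:R by [].
  have -> : ((2 : int)%:~R : R) = 2 by [].
  move=> h; lra.
apply: le_trans (outer_bound e B B0 hB) _.
apply: series_le => [i|n]; first by rewrite mulr_ge0 // subr_ge0 ltW.
have -> : \sum_(i < n) B i * (1 - r) = 2 * C * \sum_(i < n) (1 - r) * r ^+ i.
  by rewrite big_distrr /=; apply: eq_bigr => i _; rewrite /B; ring.
rewrite geom_sum.
have rn : 0 <= r ^+ n by rewrite exprn_ge0.
have h : 2 * C * (1 - r ^+ n) <= 2 * C.
  by rewrite -[leRHS]mulr1 ler_wpM2l ?mulr_ge0 // gerBl.
apply: le_trans h _; lra.
Qed.

End Meas.

End Quad.
End Val.

Theorem lemma3p6 (R : realType) (K : fieldType) (v : K -> int) (q : nat)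
  (mu : {measure set (Kmeas v) -> \bar R})
  (e : nat) (m u : K) (N : nat) :
  nonarch_local_field v q ->
  (* mu is the additive Haar measure d_v x with Vol(O_F) = 1 *)
  (forall (a : K) (A : set (Kmeas v)), measurable A ->
      mu [set x : Kmeas v | A ((x : K) + a)] = mu A) ->
  mu (inO v : set (Kmeas v)) = 1%E ->
  inO v m -> unitO v u ->
  (* N_v = #{ t in O/varpi O : t^2 - m t + u = 0 } *)
  num_classes_mod v (fun t => inO v t /\ congrv v (t ^+ 2 - m * t + u) 0) N ->
  (`| \int[mu]_(y in [set y : Kmeas v | (y : K) != 0%R])
        ((\int[mu]_(x in [set: Kmeas v])
            (phi_v v R e (invmx (gxy x y) *m gamma_mu m u *m gxy x y))%:E)
         * ((absv v R q y) ^-2)%R%:E) | <=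
   lemma3p6_bound v R q N e (m ^+ 2 - 4%:R * u))%E.
Proof.
move=> [Hv _ Hcl] Htr Hmu1 hm hu hN.
rewrite gee0_abs; last by apply: integral_ge0 => y _; apply: Fy_ge0.
rewrite /lemma3p6_bound; case: eqP => [_|/eqP D0]; first by rewrite leey.
case: ifP => [/andP[/eqP e0 /eqP f0]|_].
  exact: (@main_special K v Hv m u hu R q mu Hcl Htr Hmu1 e N e0 D0 f0 hN).
exact: (@main_general K v Hv m u hu R q mu Hcl Htr Hmu1 e D0).
Qed.
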